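(* Let $G$ be an $n$-node network graph and let $T$ be an HST constructed on top of $G$ by the randomized algorithm of Fakcharoenphol, Rao and Talwar. Let $R$ be a dynamic set of queueing requests issued at the nodes of $G$ (each request at node $v$ viewed as issued at the leaf of $T$ corresponding to $v$), and assume the sequence of requests is independent of the randomness of the HST construction. Then $\mathbb{E}[\mathrm{OPT}_T(R)]\le O(\log n)\cdot \mathrm{OPT}_G(R)$.
   Context: The Fakcharoenphol–Rao–Talwar (FRT) randomized construction maps the nodes of $G$ bijectively to the leaves of an HST $T$ such that for all nodes $x,y$: $d_G(x,y)\le d_T(x,y)$ and $\mathbb{E}[d_T(x,y)]=O(\log n)\cdot d_G(x,y)$. A request is $r=(v,t)$ (node $v$, time $t\ge0$), with a dummy request $r_0=(v_0,0)$ ordered first. For a weighted graph $H$, $\mathrm{OPT}_H(R)=\min_\pi\sum_{i=1}^{|R|-1}\max\{d_H(v_{\pi(i-1)},v_{\pi(i)}),\,t_{\pi(i-1)}-t_{\pi(i)}\}$, minimum over orderings $\pi$ of $R$ with $\pi(0)=0$. *)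

(* Defs.v *)
From HB Require Import structures.
From mathcomp Require Import all_boot all_order all_algebra all_fingroup.
From mathcomp Require Import all_classical all_reals all_analysis.
Set Implicit Arguments. Unset Strict Implicit. Unset Printing Implicit Defensive.
Import Order.TTheory GRing.Theory Num.Theory.
Local Open Scope ring_scope.

Section Defs.
Variable R : realType.

Definition is_metric (n : nat) (d : 'I_n -> 'I_n -> R) : Prop :=
  (forall x y, 0 <= d x y) /\
  (forall x y, d x y = 0 <-> x = y) /\
  (forall x y, d x y = d y x) /\
  (forall x y z, d x z <= d x y + d y z).

(* Leaf metric of a hierarchically well-separated tree whose leaves are
   (bijectively) the nodes of G: an ultrametric. *)
Definition is_hst_leaf_metric (n : nat) (d : 'I_n -> 'I_n -> R) : Prop :=
  is_metric d /\ (forall x y z, d x z <= Num.max (d x y) (d y z)).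

(* Cost of serving the requests (v i, t i), i = 0..k (request 0 is the dummy
   request r_0 = (v_0, 0)), in the order given by the permutation s:
   sum_{i=1}^{k} max { d(v_{s(i-1)}, v_{s(i)}), t_{s(i-1)} - t_{s(i)} }. *)
Definition order_cost (n k : nat) (d : 'I_n -> 'I_n -> R)
    (v : 'I_k.+1 -> 'I_n) (t : 'I_k.+1 -> R) (s : 'S_k.+1) : R :=
  \sum_(i < k)
    Num.max (d (v (s (inord i))) (v (s (inord i.+1))))
            (t (s (inord i)) - t (s (inord i.+1))).

Definition OPT (n k : nat) (d : 'I_n -> 'I_n -> R)
    (v : 'I_k.+1 -> 'I_n) (t : 'I_k.+1 -> R) : R :=
  \big[Num.min/order_cost d v t 1%g]_(s : 'S_k.+1 | s ord0 == ord0)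
     order_cost d v t s.

Definition is_distr (Omega : finType) (p : Omega -> R) : Prop :=
  (forall w, 0 <= p w) /\ \sum_(w : Omega) p w = 1.

Definition expect (Omega : finType) (p : Omega -> R) (X : Omega -> R) : R :=
  \sum_(w : Omega) p w * X w.

End Defs.

(* Main.v *)
Require Import Defs.
From HB Require Import structures.
From mathcomp Require Import all_boot all_order all_algebra all_fingroup.
From mathcomp Require Import all_classical all_reals all_analysis.
Import Order.TTheory GRing.Theory Num.Theory.
Local Open Scope ring_scope.

Lemma OPT_le (R : realType) n k (d : 'I_n -> 'I_n -> R) v t (s : 'S_k.+1) :
  s ord0 = ord0 -> OPT d v t <= order_cost d v t s.
Proof. by move=> h; rewrite /OPT; apply: bigmin_le_cond; rewrite h. Qed.

Lemma OPT_attained (R : realType) n k (d : 'I_n -> 'I_n -> R) v t :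
  exists s : 'S_k.+1, s ord0 = ord0 /\ OPT d v t = order_cost d v t s.
Proof.
rewrite /OPT.
apply: (big_ind (fun x => exists s : 'S_k.+1, s ord0 = ord0 /\ x = order_cost d v t s)).
- by exists 1%g; rewrite perm1.
- move=> x y [s1 [h1 ->]] [s2 [h2 ->]].
  rewrite /Num.min; case: ifP => _; [by exists s1 | by exists s2].
- by move=> s /eqP h; exists s.
Qed.

Theorem lemma1 (R : realType) (c : R) (hc : 0 < c) :
  exists C : R, 0 < C /\
  forall (n : nat) (dG : 'I_n -> 'I_n -> R)
         (Omega : finType) (p : Omega -> R) (dT : Omega -> 'I_n -> 'I_n -> R),
    (2 <= n)%N ->
    is_metric dG ->
    is_distr p ->
    (forall w, is_hst_leaf_metric (dT w)) ->
    (forall w x y, dG x y <= dT w x y) ->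
    (forall x y, expect p (fun w => dT w x y) <= c * ln n%:R * dG x y) ->
    forall (k : nat) (v : 'I_k.+1 -> 'I_n) (t : 'I_k.+1 -> R),
      t ord0 = 0 -> (forall i, 0 <= t i) ->
      expect p (fun w => OPT (dT w) v t) <= C * ln n%:R * OPT dG v t.
Proof.
have l2 : 0 < ln (2%:R : R) by apply: ln_gt0; rewrite ltr1n.
exists (c + (ln 2%:R)^-1); split; first by rewrite addr_gt0 // invr_gt0.
move=> n dG Omega p dT hn hG [p0 p1] hT hGT hE k v t t0 tpos.
have [s [s0 ->]] := (@OPT_attained R n k dG v t).
have L2 : ln 2%:R <= ln (n%:R : R).
  rewrite ler_ln ?posrE ?ltr0n //; last by apply: leq_trans hn.
  by rewrite ler_nat.
have Lpos : 0 < ln (n%:R : R) by apply: lt_le_trans L2.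
apply: (@le_trans _ _ (expect p (fun w => order_cost (dT w) v t s))).
  by apply: ler_sum => w _; apply: ler_wpM2l => //; apply: OPT_le.
rewrite /expect /order_cost.
under eq_bigr do rewrite mulr_sumr.
rewrite exchange_big /= mulr_sumr; apply: ler_sum => i _.
set a := v (s (inord i)); set b := v (s (inord i.+1)).
set D := t (s (inord i)) - t (s (inord i.+1)).
apply: (@le_trans _ _ (\sum_w (p w * dT w a b + p w * Num.max D 0))).
  apply: ler_sum => w _; rewrite -mulrDr; apply: ler_wpM2l => //.
  have [h0 _] := hT w; have [h00 _] := h0.
  rewrite ge_max; apply/andP; split.
    by rewrite lerDl le_max lexx orbT.
  apply: (@le_trans _ _ (Num.max D 0)); first by rewrite le_max lexx.
  by rewrite lerDr.
rewrite big_split /= -mulr_suml p1 mul1r.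
apply: (@le_trans _ _ (c * ln n%:R * dG a b + Num.max D 0)).
  by apply: lerD => //; apply: hE.
set M := Num.max (dG a b) D.
have [g0 _] := hG.
have hM1 : dG a b <= M by rewrite le_max lexx.
have hM2 : Num.max D 0 <= M by rewrite ge_max le_max lexx orbT /= le_max g0.
have M0 : 0 <= M by apply: le_trans (g0 a b) hM1.
rewrite mulrDl mulrDl; apply: lerD.
  by apply: ler_wpM2l => //; apply: mulr_ge0; [apply: ltW | apply: ltW].
apply: (le_trans hM2).
rewrite -[leLHS]mul1r; apply: ler_wpM2r => //.
apply: (@le_trans _ _ ((ln 2%:R)^-1 * ln 2%:R)); first by rewrite mulVf // lt0r_neq0.
by apply: ler_wpM2l => //; rewrite invr_ge0 ltW.
Qed.
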